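(* (i) Every invertible linear map $A:\mathcal{F}_p\to\mathcal{F}_p$ (resp. $\mathcal{F}_c\to\mathcal{F}_c$), $f\mapsto fA$, preserves static equilibrium: a force system $\{f_i\}_{i\in\mathcal{I}}$ satisfies $\sum_i f_i=0$ if and only if $\sum_i f_iA=0$. Every projective transformation of a statics problem can be described as the composition of a linear-map equivalence class $A_\sim=\{\lambda A:\lambda\neq 0\}$ acting on the forces and an equilibrium preserving congruence of the force system, and every such composition gives a projective transformation of the statics problem. (ii) Every invertible linear map $A:\mathcal{E}_p\to\mathcal{E}_p$ (resp. $\mathcal{E}_c\to\mathcal{E}_c$), $e\mapsto eA$, preserves compatibility. Every projective transformation of a kinematics problem can be described as the composition of a linear-map equivalence class acting on the velocities and a compatibility preserving congruence of the velocity system, and every such composition gives a projective transformation of the kinematics problem.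
   Context: Points of the real projective plane $PG(2)$ are classes of nonzero vectors of $\mathbb{R}^3$ up to nonzero scaling; a Euclidean point $\vec p\in\mathbb{R}^2$ is $(\vec p,1)$ and an ideal point in direction $\vec u$ is $(\vec u,0)$. Lines are also represented by nonzero vectors up to scaling, and point $p$ lies on line $l$ iff $\langle p,l\rangle=0$. A projective transformation of $PG(2)$ (map sending points to points, lines to lines, preserving incidence) is given by an invertible $3\times3$ matrix $P$ up to scaling, acting on points as $p\mapsto pP$ and on lines as $l\mapsto lP^{-T}$. Mechanical quantities (bodies lie in the $x,y$ plane): $\mathcal{F}_p$: a coplanar force with components $F_x,F_y$ and moment $M_z$ about the origin is $f=(-F_y,F_x,M_z)\in\mathbb{R}^3$; its line of action is the projective line $f$ (up to scaling). $\mathcal{F}_c$: a force orthogonal to the plane with $z$-component $F_z$ and moments $M_x,M_y$ about the coordinate axes is $f=(-M_y,M_x,F_z)$; it represents its point of action. $\mathcal{E}_c$: a planar rigid motion with velocity $(v_x,v_y)$ of the origin and angular velocity $\omega_z$ is $e=(-v_y,v_x,\omega_z)$, representing the point about which the body rotates. $\mathcal{E}_p$: a motion with $z$-velocity $v_z$ of the origin and angular velocity components $\omega_x,\omega_y$ is $e=(-\omega_y,\omega_x,v_z)$, representing the line about which the body rotates. A force system on a body is in static equilibrium iff the sum of its vectors is $0$. Compatibility conditions have the form $\langle l,e_j-e_k\rangle=0$ for a line $l$ (in $\mathcal{E}_c$) or $\langle p,e_j-e_k\rangle=0$ for a point $p$ (in $\mathcal{E}_p$), for velocities $e_j,e_k$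 of two bodies. A congruence of a force (resp. velocity) system $\{f_i\}$ is a map $\{f_i\}\mapsto\{\psi_if_i\}$ with all $\psi_i\in\mathbb{R}\setminus\{0\}$; it is equilibrium (resp. compatibility) preserving for a given problem if static equilibrium (resp. compatibility) of all (sub)bodies of the problem is preserved. A projective transformation of a statics (resp. kinematics) problem is a transformation of the structure into another one such that all points and lines of the structure, and the points and lines of action of the forces (resp. velocities), are transformed by one projective transformation of $PG(2)$, and the image is in static equilibrium (resp. compatible) if and only if the original is. *)

(* Defs.v *)
From HB Require Import structures.
From mathcomp Require Import all_boot all_order all_algebra.
From mathcomp Require Import reals.
Set Implicit Arguments. Unset Strict Implicit. Unset Printing Implicit Defensive.
Import Order.TTheory GRing.Theory Num.Theory.
Local Open Scope ring_scope.

Section Defs.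
Variable R : realType.

Definition dot (u v : 'rV[R]_3) : R := \sum_(i < 3) u 0 i * v 0 i.

Inductive kind := PointK | LineK.
Definition dual (k : kind) : kind :=
  match k with PointK => LineK | LineK => PointK end.

Definition act_mx (k : kind) (P : 'M[R]_3) : 'M[R]_3 :=
  match k with PointK => P | LineK => (invmx P)^T end.

Definition proj_img (M : 'M[R]_3) (u v : 'rV[R]_3) : Prop :=
  exists c : R, c != 0 /\ v = c *: (u *m M).

Definition in_class (M A : 'M[R]_3) : Prop :=
  exists lambda : R, lambda != 0 /\ A = lambda *: M.

Definition geom_mapped (Pt Ln : finType) (P : 'M[R]_3)
    (pts pts' : Pt -> 'rV[R]_3) (lns lns' : Ln -> 'rV[R]_3) : Prop :=
  (forall x, proj_img (act_mx PointK P) (pts x) (pts' x)) /\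
  (forall y, proj_img (act_mx LineK P) (lns y) (lns' y)).

Definition congruence (I : finType) (psi : I -> R) : Prop :=
  forall i, psi i != 0.
Definition cong (I : finType) (psi : I -> R) (f : I -> 'rV[R]_3) :
  I -> 'rV[R]_3 := fun i => psi i *: f i.

(* A statics problem: force system f indexed by a finite type I, and a list B
   of (sub)bodies, each given by the set of forces acting on it. *)
Definition equilibrium (I : finType) (B : seq {set I}) (f : I -> 'rV[R]_3)
  : Prop := forall S, S \in B -> \sum_(i in S) f i = 0.

Definition equil_preserving (I : finType) (B : seq {set I}) (psi : I -> R)
    (f : I -> 'rV[R]_3) : Prop :=
  congruence psi /\ (equilibrium B (cong psi f) <-> equilibrium B f).

(* Projective transformation (with matrix P) of the statics problem
   (pts, lns, B, f) into (pts', lns', B, g); forces are objects of kind k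
   (k = LineK for F_p, k = PointK for F_c). *)
Definition statics_ptransf (k : kind) (Pt Ln I : finType) (P : 'M[R]_3)
    (B : seq {set I})
    (pts pts' : Pt -> 'rV[R]_3) (lns lns' : Ln -> 'rV[R]_3)
    (f g : I -> 'rV[R]_3) : Prop :=
  [/\ P \in unitmx, geom_mapped P pts pts' lns lns',
      (forall i, proj_img (act_mx k P) (f i) (g i)) &
      (equilibrium B g <-> equilibrium B f)].

(* A kinematics problem: velocities e of bodies indexed by J, and compatibility
   conditions indexed by C: condition c reads <cl c, e_j - e_k> = 0 with
   (j, k) = cb c; cl c is a line (E_c) or a point (E_p) of the structure. *)
Definition compatible (J C : finType) (cl : C -> 'rV[R]_3) (cb : C -> J * J)
    (e : J -> 'rV[R]_3) : Prop :=
  forall c, dot (cl c) (e (cb c).1 - e (cb c).2) = 0.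

Definition compat_preserving (J C : finType) (cl : C -> 'rV[R]_3)
    (cb : C -> J * J) (psi : J -> R) (e : J -> 'rV[R]_3) : Prop :=
  congruence psi /\ (compatible cl cb (cong psi e) <-> compatible cl cb e).

(* Projective transformation (matrix P) of the kinematics problem; velocities
   are objects of kind k (k = PointK for E_c, k = LineK for E_p) and the
   condition elements cl are of the dual kind. *)
Definition kin_ptransf (k : kind) (Pt Ln J C : finType) (P : 'M[R]_3)
    (cb : C -> J * J)
    (pts pts' : Pt -> 'rV[R]_3) (lns lns' : Ln -> 'rV[R]_3)
    (cl cl' : C -> 'rV[R]_3) (e e' : J -> 'rV[R]_3) : Prop :=
  [/\ P \in unitmx, geom_mapped P pts pts' lns lns',
      (forall c, proj_img (act_mx (dual k) P) (cl c) (cl' c)),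
      (forall j, proj_img (act_mx k P) (e j) (e' j)) &
      (compatible cl' cb e' <-> compatible cl cb e)].

End Defs.

(* Main.v *)
Require Import Defs.
From HB Require Import structures.
From mathcomp Require Import all_boot all_order all_algebra.
From mathcomp Require Import reals.
From Stdlib Require Import FunctionalExtensionality.
Import Order.TTheory GRing.Theory Num.Theory.
Local Open Scope ring_scope.


Section Helpers.
Set Implicit Arguments.
Variable R : realType.

Lemma dotE (u v : 'rV[R]_3) : dot u v = (u *m v^T) 0 0.
Proof. rewrite /dot !mxE; apply: eq_bigr => i _; by rewrite mxE. Qed.

Lemma dot_transf (M N : 'M[R]_3) a l (u v : 'rV[R]_3) :
  M *m N^T = 1%:M -> dot (a *: (u *m M)) (l *: (v *m N)) = a * l * dot u v.
Proof.
move=> H; rewrite !dotE -scalemxAl linearZ /= -scalemxAr trmx_mul.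
rewrite mulmxA -(mulmxA u) H mulmx1 !mxE; by rewrite mulrA.
Qed.

Lemma compat_transf (J C : finType) (cl cl' : C -> 'rV[R]_3) (cb : C -> J * J)
  (e e' : J -> 'rV[R]_3) (M N : 'M[R]_3) (lam : R) (d : C -> R) :
  M *m N^T = 1%:M -> lam != 0 -> (forall c, d c != 0) ->
  (forall c, cl' c = d c *: (cl c *m M)) ->
  (forall j, e' j = lam *: (e j *m N)) ->
  (compatible cl' cb e' <-> compatible cl cb e).
Proof.
move=> H hl hd hcl he; split => Hc c; have := Hc c;
rewrite hcl !he -scalerBr -mulmxBl dot_transf //.
  by move/eqP; rewrite !mulf_eq0 (negbTE hl) (negbTE (hd c)) /= => /eqP.
by move=> ->; rewrite mulr0.
Qed.

Lemma sum_unit (I : finType) (S : {set I}) (f : I -> 'rV[R]_3) (A : 'M[R]_3) :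
  A \in unitmx -> (\sum_(i in S) f i = 0 <-> \sum_(i in S) (f i *m A) = 0).
Proof.
move=> hA; rewrite -mulmx_suml; split; first by move=> ->; rewrite mul0mx.
by move=> H; rewrite -(mulmxK hA (\sum_(i in S) f i)) H mul0mx.
Qed.

Lemma equil_unit (A : 'M[R]_3) (I : finType) (B : seq {set I}) (f : I -> 'rV[R]_3) :
  A \in unitmx -> (equilibrium B (fun i => f i *m A) <-> equilibrium B f).
Proof.
move=> hA; split => H S hS; have := H S hS; by rewrite (sum_unit S f A hA).
Qed.

Lemma act_unit k (P : 'M[R]_3) : P \in unitmx -> act_mx k P \in unitmx.
Proof. by case: k => //= hP; rewrite unitmx_tr unitmx_inv. Qed.

Lemma act_dual k (P : 'M[R]_3) : P \in unitmx ->
  act_mx (dual k) P *m (act_mx k P)^T = 1%:M.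
Proof.
move=> hP; case: k => /=.
  by rewrite -trmx_mul mulmxV // trmx1.
by rewrite trmxK mulmxV.
Qed.

Lemma unitZ (M : 'M[R]_3) l : l != 0 -> M \in unitmx -> l *: M \in unitmx.
Proof. by move=> hl hM; rewrite unitmxZ ?unitfE. Qed.

End Helpers.

Theorem theorem3 (R : realType) :
  (* (i), first claim: invertible linear maps preserve static equilibrium *)
  (forall (A : 'M[R]_3), A \in unitmx ->
     forall (I : finType) (f : I -> 'rV[R]_3),
       \sum_(i : I) f i = 0 <-> \sum_(i : I) (f i *m A) = 0)
  /\
  (* (i), every projective transformation of a statics problem decomposes *)
  (forall (k : kind) (Pt Ln I : finType) (P : 'M[R]_3) (B : seq {set I})
          (pts pts' : Pt -> 'rV[R]_3) (lns lns' : Ln -> 'rV[R]_3)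
          (f g : I -> 'rV[R]_3),
     statics_ptransf k P B pts pts' lns lns' f g ->
     exists (A : 'M[R]_3) (psi : I -> R),
       [/\ in_class (act_mx k P) A,
           equil_preserving B psi (fun i => f i *m A) &
           forall i, g i = cong psi (fun i => f i *m A) i])
  /\
  (* (i), every such composition is a projective transformation *)
  (forall (k : kind) (Pt Ln I : finType) (P A : 'M[R]_3) (B : seq {set I})
          (pts pts' : Pt -> 'rV[R]_3) (lns lns' : Ln -> 'rV[R]_3)
          (f : I -> 'rV[R]_3) (psi : I -> R),
     P \in unitmx -> in_class (act_mx k P) A ->
     geom_mapped P pts pts' lns lns' ->
     equil_preserving B psi (fun i => f i *m A) ->
     statics_ptransf k P B pts pts' lns lns' f (cong psi (fun i => f i *m A)))
  /\
  (* (ii), first claim: invertible linear maps preserve compatibility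
     (the condition points/lines being transformed dually, l |-> l A^{-T}) *)
  (forall (A : 'M[R]_3), A \in unitmx ->
     forall (J C : finType) (cl : C -> 'rV[R]_3) (cb : C -> J * J)
            (e : J -> 'rV[R]_3),
       compatible cl cb e <->
       compatible (fun c => cl c *m (invmx A)^T) cb (fun j => e j *m A))
  /\
  (* (ii), every projective transformation of a kinematics problem decomposes *)
  (forall (k : kind) (Pt Ln J C : finType) (P : 'M[R]_3) (cb : C -> J * J)
          (pts pts' : Pt -> 'rV[R]_3) (lns lns' : Ln -> 'rV[R]_3)
          (cl cl' : C -> 'rV[R]_3) (e e' : J -> 'rV[R]_3),
     kin_ptransf k P cb pts pts' lns lns' cl cl' e e' ->
     exists (A : 'M[R]_3) (psi : J -> R),
       [/\ in_class (act_mx k P) A,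
           compat_preserving cl' cb psi (fun j => e j *m A) &
           forall j, e' j = cong psi (fun j => e j *m A) j])
  /\
  (* (ii), every such composition is a projective transformation *)
  (forall (k : kind) (Pt Ln J C : finType) (P A : 'M[R]_3) (cb : C -> J * J)
          (pts pts' : Pt -> 'rV[R]_3) (lns lns' : Ln -> 'rV[R]_3)
          (cl cl' : C -> 'rV[R]_3) (e : J -> 'rV[R]_3) (psi : J -> R),
     P \in unitmx -> in_class (act_mx k P) A ->
     geom_mapped P pts pts' lns lns' ->
     (forall c, proj_img (act_mx (dual k) P) (cl c) (cl' c)) ->
     compat_preserving cl' cb psi (fun j => e j *m A) ->
     kin_ptransf k P cb pts pts' lns lns' cl cl'
       e (cong psi (fun j => e j *m A))).
Proof.
split.
  move=> A hA I f; have := @sum_unit R I [set: I] f A hA.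
  have E (F : I -> 'rV[R]_3) : \sum_(i in [set: I]) F i = \sum_i F i.
    by apply: eq_bigl => i; rewrite inE.
  by rewrite !E.
split.
  move=> k Pt Ln I P B pts pts' lns lns' f g [hP hg hf heq].
  have [psi Hpsi] := fin_all_exists hf.
  exists (act_mx k P), psi; split.
  - by exists 1; rewrite oner_eq0 scale1r.
  - split; first by move=> i; have [] := Hpsi i.
    have -> : cong psi (fun i => f i *m act_mx k P) = g.
      by apply: functional_extensionality => i; have [_ ->] := Hpsi i.
    by rewrite heq; symmetry; apply: equil_unit; apply: act_unit.
  - by move=> i; have [_ ->] := Hpsi i.
split.
  move=> k Pt Ln I P A B pts pts' lns lns' f psi hP [l [hl ->]] hg [hc heq].
  split => //.
    by move=> i; exists (psi i * l); rewrite /cong mulf_neq0 // -scalemxAr scalerA.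
  by rewrite heq; apply: equil_unit; apply: unitZ => //; apply: act_unit.
split.
  move=> A hA J C cl cb e; symmetry.
  apply: (@compat_transf _ _ _ cl _ cb e _ (invmx A)^T A 1 (fun _ => 1)) => //.
  - by rewrite -trmx_mul mulmxV // trmx1.
  - exact: oner_neq0.
  - by move=> _; exact: oner_neq0.
  - by move=> c; rewrite scale1r.
  - by move=> j; rewrite scale1r.
split.
  move=> k Pt Ln J C P cb pts pts' lns lns' cl cl' e e' [hP hg hcl he heq].
  have [psi Hpsi] := fin_all_exists he.
  have [d Hd] := fin_all_exists hcl.
  exists (act_mx k P), psi; split.
  - by exists 1; rewrite oner_eq0 scale1r.
  - split; first by move=> i; have [] := Hpsi i.
    have -> : cong psi (fun i => e i *m act_mx k P) = e'.
      by apply: functional_extensionality => i; have [_ ->] := Hpsi i.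
    rewrite heq; symmetry.
    apply: (@compat_transf R J C cl cl' cb e _ (act_mx (dual k) P) (act_mx k P) 1 d).
    + exact: act_dual.
    + exact: oner_neq0.
    + by move=> c; have [] := Hd c.
    + by move=> c; have [_ ->] := Hd c.
    + by move=> j; rewrite scale1r.
  - by move=> i; have [_ ->] := Hpsi i.
move=> k Pt Ln J C P A cb pts pts' lns lns' cl cl' e psi hP [l [hl ->]] hg hcl [hc heq].
split => //.
  by move=> i; exists (psi i * l); rewrite /cong mulf_neq0 // -scalemxAr scalerA.
rewrite heq.
have [d Hd] := fin_all_exists hcl.
apply: (@compat_transf R J C cl cl' cb e _ (act_mx (dual k) P) (act_mx k P) l d).
+ exact: act_dual.
+ exact: hl.
+ by move=> c; have [] := Hd c.
+ by move=> c; have [_ ->] := Hd c.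
+ by move=> j; rewrite scalemxAr.
Qed.
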